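(* Let $\mathcal{A}$ be a finite alphabet, $N$ a finite set of integers and $f:\mathcal{A}^{|N|}\to\mathcal{A}$ an irreducible local rule. (i) If $N$ is reflection-symmetrical or $\widehat{r\nu}f=f$ for some $\nu\in S_{\mathcal{A}}$, then the $\mathcal{T}_{\mathcal{A}}$-equivalence class of $\Phi^N_f$ is \[[\Phi^N_f]=\{\Phi^M_g\mid M\cong N,\ g\in[f]\}.\] (ii) Otherwise $N$ and $[f]$ induce the following two (distinct) equivalence classes of $\mathcal{C}_{\mathcal{A}}/\mathcal{T}_{\mathcal{A}}$: \[[\Phi^N_f]=\{\Phi^{d+N}_{\hat\nu f},\ \Phi^{d-N}_{\widehat{r\nu}f}\mid d\in\mathbb{Z},\ \nu\in S_{\mathcal{A}}\},\qquad [\Phi^N_{\hat rf}]=\{\Phi^{d+N}_{\widehat{r\nu}f},\ \Phi^{d-N}_{\hat\nu f}\mid d\in\mathbb{Z},\ \nu\in S_{\mathcal{A}}\}.\]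
   Context: For finite $N=\{j_1<\dots<j_n\}\subset\mathbb{Z}$ and $f:\mathcal{A}^n\to\mathcal{A}$, $\Phi^N_f(x)_i=f(x_{i+j_1}\dots x_{i+j_n})$. A local rule is irreducible if it depends on every argument (for each index some change of only that input letter changes the output). $S_{\mathcal{A}}$ is the group of permutations of $\mathcal{A}$. Rule operators: $\hat\nu f(w)=\nu f(\nu^{-1}w)$ (letterwise), $\hat r f(w)=f(rw)$ where $r(a_1\dots a_n)=a_n\dots a_1$, and $\widehat{r\nu}=\hat r\hat\nu$; $[f]=\{\hat\alpha f\mid \alpha\in\{1,r\}\times S_{\mathcal{A}}\}$. $\mathcal{C}_{\mathcal{A}}$ is the set of all CA global maps on $\mathcal{A}^{\mathbb{Z}}$. Operators on global maps: $\sigma\Phi=\sigma\circ\Phi$ with $(\sigma x)_i=x_{i+1}$; $\hat\nu\Phi(x)=\nu\Phi(\nu^{-1}x)$ (cellwise); $\hat r\Phi(x)=r\Phi(rx)$ with $(rx)_i=x_{-i}$. $\mathcal{T}_{\mathcal{A}}=\{\sigma^i\hat r^j\hat\nu\mid i\in\mathbb{Z},j\in\{0,1\},\nu\in S_{\mathcal{A}}\}$ is the group they generate, acting on $\mathcal{C}_{\mathcal{A}}$; $[\Phi]$ denotes the orbit of $\Phi$. For sets of integers, $d+N=\{d+i\mid i\in N\}$, $d-N=\{d-i\mid i\in N\}$; $M\cong N$ iff $N=j+M$ or $N=j-M$ for some $j\in\mathbb{Z}$; $N$ is reflection-symmetrical if $N=j-N$ for some $j\in\mathbb{Z}$. *)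

(* Defs.v *)
From HB Require Import structures.
From mathcomp Require Import all_boot all_order all_algebra all_fingroup.
Set Implicit Arguments. Unset Strict Implicit. Unset Printing Implicit Defensive.
Import GRing.Theory Num.Theory.
Local Open Scope ring_scope.

Definition config (A : Type) := int -> A.
Definition gmap (A : Type) := config A -> config A.

Definition nbhd (n : nat) (N : n.-tuple int) : bool :=
  sorted (fun a b : int => a < b) (tval N).

Definition Phi (A : Type) (n : nat) (N : n.-tuple int) (f : n.-tuple A -> A) : gmap A :=
  fun x i => f (map_tuple (fun j => x (i + j)) N).

Definition irreducible_rule (A : eqType) (n : nat) (f : n.-tuple A -> A) : Prop :=
  forall k : 'I_n, exists (w : n.-tuple A) (a : A),
    f w != f [tuple (if i == k then a else tnth w i) | i < n].

Definition rhat_nu (A : finType) (n : nat) (nu : {perm A}) (f : n.-tuple A -> A)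
  : n.-tuple A -> A := fun w => nu (f (map_tuple (fun a => (nu^-1)%g a) w)).
Definition rhat_r (A : Type) (n : nat) (f : n.-tuple A -> A) : n.-tuple A -> A :=
  fun w => f (rev_tuple w).
Definition rhat_rnu (A : finType) (n : nat) (nu : {perm A}) (f : n.-tuple A -> A)
  : n.-tuple A -> A := rhat_r (rhat_nu nu f).
Definition rule_class (A : finType) (n : nat) (f : n.-tuple A -> A)
  (g : n.-tuple A -> A) : Prop :=
  exists nu : {perm A}, g = rhat_nu nu f \/ g = rhat_rnu nu f.

Definition gshift (A : Type) (k : int) (F : gmap A) : gmap A :=
  fun x i => F x (i + k).
Definition ghat_nu (A : finType) (nu : {perm A}) (F : gmap A) : gmap A :=
  fun x i => nu (F (fun k => (nu^-1)%g (x k)) i).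
Definition crev (A : Type) (x : config A) : config A := fun i => x (- i).
Definition ghat_r (A : Type) (F : gmap A) : gmap A := fun x => crev (F (crev x)).
(* the element sigma^k r^b nu of T_A acting on F *)
Definition Tact (A : finType) (k : int) (b : bool) (nu : {perm A}) (F : gmap A) : gmap A :=
  gshift k ((if b then @ghat_r A else id) (ghat_nu nu F)).
Definition T_orbit (A : finType) (F : gmap A) (G : gmap A) : Prop :=
  exists (k : int) (b : bool) (nu : {perm A}), G = Tact k b nu F.

(* d + N and d - N as (strictly increasing) tuples *)
Definition ntrans (n : nat) (d : int) (N : n.-tuple int) : n.-tuple int :=
  map_tuple (fun j => d + j) N.
Definition nrefl (n : nat) (d : int) (N : n.-tuple int) : n.-tuple int :=
  rev_tuple (map_tuple (fun j => d - j) N).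

Definition ncong (n m : nat) (M : m.-tuple int) (N : n.-tuple int) : Prop :=
  exists j : int, (tval N =i [seq j + i | i <- tval M]) \/
                  (tval N =i [seq j - i | i <- tval M]).
Definition reflsym (n : nat) (N : n.-tuple int) : Prop :=
  exists j : int, tval N =i [seq j - i | i <- tval N].

(* Main.v *)
Require Import Defs.
From HB Require Import structures.
From mathcomp Require Import all_boot all_order all_algebra all_fingroup.
From mathcomp Require Import zify.
From Stdlib Require Import FunctionalExtensionality.
Import Order.TTheory GRing.Theory Num.Theory.
Set Implicit Arguments. Unset Strict Implicit. Unset Printing Implicit Defensive.
Local Open Scope ring_scope.

Section Helpers.
Variable A : finType.

Definition cfg (n : nat) (N : n.-tuple int) (a : A) (w : n.-tuple A) : config A :=
  fun p => nth a w (index p N).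

Lemma ltT : transitive (fun a b : int => a < b).
Proof. move=> y x z; exact: lt_trans. Qed.
Lemma ltI : irreflexive (fun a b : int => a < b).
Proof. move=> x; exact: ltxx. Qed.

Lemma nbhd_uniq n (N : n.-tuple int) : nbhd N -> uniq N.
Proof. move=> h; exact: (sorted_uniq ltT ltI h). Qed.

Lemma Phi_cfg n (N : n.-tuple int) (g : n.-tuple A -> A) a w :
  uniq N -> Phi N g (cfg N a w) 0 = g w.
Proof.
move=> uN; rewrite /Phi; congr g; apply: eq_from_tnth => i.
by rewrite tnth_map add0r /cfg (tnth_nth 0 N) index_uniq ?size_tuple // (tnth_nth a).
Qed.

Lemma Phi_sub n (M N : n.-tuple int) (g f : n.-tuple A -> A) :
  irreducible_rule f -> uniq N -> Phi M g = Phi N f -> {subset N <= M}.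
Proof.
move=> irr uN E j /tnthP [k ->].
have [w [a Hne]] := irr k.
apply/negPn/negP => jM.
have /tuple_uniqP inj := uN.
set x := cfg N a w.
set x' := fun p => if p == tnth N k then a else x p.
have h1 : Phi N f x 0 = f w by rewrite /x Phi_cfg.
have h2 : Phi N f x' 0 = f [tuple (if i == k then a else tnth w i) | i < n].
  rewrite /Phi; congr f; apply: eq_from_tnth => i.
  rewrite tnth_map tnth_mktuple add0r /x' (inj_eq inj).
  case: (i == k) => //.
  by rewrite /x /cfg (tnth_nth 0 N) index_uniq ?size_tuple // (tnth_nth a).
have h3 : Phi M g x 0 = Phi M g x' 0.
  rewrite /Phi; congr g; apply: eq_from_tnth => i.
  rewrite !tnth_map /x' add0r; case: eqP => // Heq.
  by move: jM; rewrite -Heq mem_tnth.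
by move: Hne; rewrite -h1 -h2 -E h3 eqxx.
Qed.

Lemma Phi_inj n (M N : n.-tuple int) (g f : n.-tuple A -> A) :
  nbhd M -> nbhd N -> irreducible_rule f -> Phi M g = Phi N f -> M = N /\ g = f.
Proof.
move=> sM sN irr E.
have uN := nbhd_uniq sN.
have sub := Phi_sub irr uN E.
have [_ eqm] := uniq_min_size uN sub (eq_leq (etrans (size_tuple M) (esym (size_tuple N)))).
have eMN : M = N by apply: val_inj; apply: (irr_sorted_eq ltT ltI sM sN) => x; rewrite eqm.
subst M; split => //.
apply: functional_extensionality => w.
have := congr1 (fun F => F (cfg N (f w) w) 0) E.
by rewrite /= !Phi_cfg.
Qed.

Lemma ghat_nu_Phi n nu (N : n.-tuple int) (g : n.-tuple A -> A) :
  ghat_nu nu (Phi N g) = Phi N (rhat_nu nu g).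
Proof.
apply: functional_extensionality => x; apply: functional_extensionality => i.
rewrite /ghat_nu /Phi /rhat_nu; congr (nu (g _)); apply: eq_from_tnth => k.
by rewrite !tnth_map.
Qed.

Lemma gshift_Phi n k (N : n.-tuple int) (g : n.-tuple A -> A) :
  gshift k (Phi N g) = Phi (ntrans k N) g.
Proof.
apply: functional_extensionality => x; apply: functional_extensionality => i.
rewrite /gshift /Phi /ntrans; congr g; apply: eq_from_tnth => j.
by rewrite !tnth_map addrA.
Qed.

Lemma ghat_r_Phi n (N : n.-tuple int) (g : n.-tuple A -> A) :
  ghat_r (Phi N g) = Phi (nrefl 0 N) (rhat_r g).
Proof.
apply: functional_extensionality => x; apply: functional_extensionality => i.
rewrite /ghat_r /crev /Phi /rhat_r /nrefl; congr g; apply: val_inj => /=.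
rewrite map_rev revK -map_comp; apply: eq_map => j /=; congr x; lia.
Qed.

Lemma ntrans_nrefl n d e (N : n.-tuple int) : ntrans d (nrefl e N) = nrefl (d + e) N.
Proof.
apply: val_inj => /=; rewrite map_rev -map_comp; congr rev; apply: eq_map => j /=; lia.
Qed.

Lemma nrefl_nrefl n d e (N : n.-tuple int) : nrefl d (nrefl e N) = ntrans (d - e) N.
Proof.
apply: val_inj => /=; rewrite map_rev revK -map_comp; apply: eq_map => j /=; lia.
Qed.

Lemma ntrans_ntrans n d e (N : n.-tuple int) : ntrans d (ntrans e N) = ntrans (d + e) N.
Proof. apply: val_inj => /=; rewrite -map_comp; apply: eq_map => j /=; lia. Qed.

Lemma ntrans0 n (N : n.-tuple int) : ntrans 0 N = N.
Proof.
apply: val_inj => /=; rewrite (eq_map (g := id)) ?map_id // => j /=; lia.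
Qed.

Lemma Tact_Phi0 n k nu (N : n.-tuple int) (f : n.-tuple A -> A) :
  Tact k false nu (Phi N f) = Phi (ntrans k N) (rhat_nu nu f).
Proof. by rewrite /Tact /= ghat_nu_Phi gshift_Phi. Qed.

Lemma Tact_Phi1 n k nu (N : n.-tuple int) (f : n.-tuple A -> A) :
  Tact k true nu (Phi N f) = Phi (nrefl k N) (rhat_rnu nu f).
Proof.
by rewrite /Tact /= ghat_nu_Phi ghat_r_Phi gshift_Phi ntrans_nrefl addr0.
Qed.

Lemma orbit_char n (N : n.-tuple int) (f : n.-tuple A -> A) G :
  T_orbit (Phi N f) G <-> exists (d : int) (nu : {perm A}),
    G = Phi (ntrans d N) (rhat_nu nu f) \/ G = Phi (nrefl d N) (rhat_rnu nu f).
Proof.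
split.
  move=> [k [b [nu ->]]]; exists k, nu; case: b.
    by right; rewrite Tact_Phi1.
  by left; rewrite Tact_Phi0.
move=> [d [nu [->|->]]].
  by exists d, false, nu; rewrite Tact_Phi0.
by exists d, true, nu; rewrite Tact_Phi1.
Qed.

Lemma rnu_r n nu (f : n.-tuple A -> A) : rhat_nu nu (rhat_r f) = rhat_rnu nu f.
Proof.
apply: functional_extensionality => w.
rewrite /rhat_nu /rhat_r /rhat_rnu; congr (nu (f _)); apply: val_inj.
by rewrite /= map_rev.
Qed.

Lemma rrnu_r n nu (f : n.-tuple A -> A) : rhat_rnu nu (rhat_r f) = rhat_nu nu f.
Proof.
apply: functional_extensionality => w.
rewrite /rhat_nu /rhat_r /rhat_rnu /rhat_nu; congr (nu (f _)); apply: val_inj.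
by rewrite /= map_rev revK.
Qed.

Lemma rrnu_comp n nu mu (f : n.-tuple A -> A) :
  rhat_rnu nu (rhat_rnu mu f) = rhat_nu (mu * nu)%g f.
Proof.
apply: functional_extensionality => w.
rewrite /rhat_nu /rhat_r /rhat_rnu /rhat_nu /rhat_r permM; congr (nu (mu (f _))).
apply: val_inj => /=; rewrite !map_rev revK -map_comp; apply: eq_map => a /=.
by rewrite invMg permM.
Qed.

Lemma nurnu_comp n nu mu (f : n.-tuple A -> A) :
  rhat_nu nu (rhat_rnu mu f) = rhat_rnu (mu * nu)%g f.
Proof.
apply: functional_extensionality => w.
rewrite /rhat_nu /rhat_r /rhat_rnu /rhat_nu /rhat_r permM; congr (nu (mu (f _))).
apply: val_inj => /=; rewrite !map_rev -map_comp; congr rev; apply: eq_map => a /=.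
by rewrite invMg permM.
Qed.

Lemma rhat_nu1 n (f : n.-tuple A -> A) : rhat_nu 1%g f = f.
Proof.
apply: functional_extensionality => w.
rewrite /rhat_nu perm1; congr f; apply: eq_from_tnth => i.
by rewrite tnth_map invg1 perm1.
Qed.

Lemma nbhd_ntrans n d (N : n.-tuple int) : nbhd N -> nbhd (ntrans d N).
Proof.
rewrite /nbhd /=; apply: homo_sorted => x y /=; by rewrite ltrD2l.
Qed.

Lemma nbhd_nrefl n d (N : n.-tuple int) : nbhd N -> nbhd (nrefl d N).
Proof.
rewrite /nbhd /= rev_sorted; apply: homo_sorted => x y /= h; rewrite ltrD2l ltrN2 //.
Qed.

Lemma ncong_tuple n (M N : n.-tuple int) : nbhd M -> nbhd N -> ncong M N ->
  exists j : int, M = ntrans j N \/ M = nrefl j N.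
Proof.
move=> sM sN [j [h|h]].
  have e : N = ntrans j M.
    apply: val_inj; apply: (irr_sorted_eq ltT ltI sN (nbhd_ntrans j sM)) => x.
    by rewrite h.
  by exists (-j); left; rewrite e ntrans_ntrans addNr ntrans0.
have e : N = nrefl j M.
  apply: val_inj; apply: (irr_sorted_eq ltT ltI sN (nbhd_nrefl j sM)) => x.
  by rewrite h /= mem_rev.
by exists j; right; rewrite e nrefl_nrefl subrr ntrans0.
Qed.

Lemma ncong_ntrans n d (N : n.-tuple int) : ncong (ntrans d N) N.
Proof.
exists (-d); left => x; rewrite /= -map_comp (eq_map (g := id)) ?map_id // => j /=; lia.
Qed.

Lemma ncong_nrefl n d (N : n.-tuple int) : ncong (nrefl d N) N.
Proof.
exists d; right => x; rewrite /= map_rev mem_rev -map_comp.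
by rewrite (eq_map (g := id)) ?map_id // => j /=; lia.
Qed.

Lemma reflsym_tuple n (N : n.-tuple int) : nbhd N -> reflsym N ->
  exists e, N = nrefl e N.
Proof.
move=> sN [e h]; exists e; apply: val_inj.
apply: (irr_sorted_eq ltT ltI sN (nbhd_nrefl e sN)) => x.
by rewrite h /= mem_rev.
Qed.

End Helpers.

Theorem proposition8 (A : finType) (n : nat) (N : n.-tuple int)
  (f : n.-tuple A -> A) :
  nbhd N -> irreducible_rule f ->
  ((reflsym N \/ exists nu : {perm A}, rhat_rnu nu f = f) ->
     forall G : gmap A, T_orbit (Phi N f) G <->
       exists (M : n.-tuple int) (g : n.-tuple A -> A),
         [/\ nbhd M, ncong M N, rule_class f g & G = Phi M g])
  /\
  (~ (reflsym N \/ exists nu : {perm A}, rhat_rnu nu f = f) ->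
     [/\ (forall G : gmap A, T_orbit (Phi N f) G <->
            exists (d : int) (nu : {perm A}),
              G = Phi (ntrans d N) (rhat_nu nu f) \/
              G = Phi (nrefl d N) (rhat_rnu nu f)),
         (forall G : gmap A, T_orbit (Phi N (rhat_r f)) G <->
            exists (d : int) (nu : {perm A}),
              G = Phi (ntrans d N) (rhat_rnu nu f) \/
              G = Phi (nrefl d N) (rhat_nu nu f))
       & ~ (forall G : gmap A, T_orbit (Phi N f) G <-> T_orbit (Phi N (rhat_r f)) G)]).
Proof.
move=> sN irr; split.
  move=> Hc G; rewrite orbit_char; split.
    move=> [d [nu [->|->]]].
      exists (ntrans d N), (rhat_nu nu f); split => //.
      - exact: nbhd_ntrans.
      - exact: ncong_ntrans.
      - by exists nu; left.
    exists (nrefl d N), (rhat_rnu nu f); split => //.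
    - exact: nbhd_nrefl.
    - exact: ncong_nrefl.
    - by exists nu; right.
  move=> [M [g [sM cM [mu [->|->]] ->]]];
    have [j [->|->]] := ncong_tuple sM sN cM.
  - by exists j, mu; left.
  - case: Hc => [/(reflsym_tuple sN) [e he] | [nu0 hf]].
      have -> : nrefl j N = ntrans (j - e) N by rewrite {1}he nrefl_nrefl.
      by exists (j - e), mu; left.
    have -> : rhat_nu mu f = rhat_rnu (nu0 * mu)%g f by rewrite -{1}hf nurnu_comp.
    by exists j, (nu0 * mu)%g; right.
  - case: Hc => [/(reflsym_tuple sN) [e he] | [nu0 hf]].
      have -> : ntrans j N = nrefl (j + e) N by rewrite {1}he ntrans_nrefl.
      by exists (j + e), mu; right.
    have -> : rhat_rnu mu f = rhat_nu (nu0 * mu)%g f by rewrite -{1}hf rrnu_comp.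
    by exists j, (nu0 * mu)%g; left.
  - by exists j, mu; right.
move=> Hn.
have Hr : forall G : gmap A, T_orbit (Phi N (rhat_r f)) G <->
            exists (d : int) (nu : {perm A}),
              G = Phi (ntrans d N) (rhat_rnu nu f) \/
              G = Phi (nrefl d N) (rhat_nu nu f).
  move=> G; rewrite orbit_char; split => -[d [nu H]]; exists d, nu; move: H;
    by rewrite rnu_r rrnu_r.
split => //; first by move=> G; exact: orbit_char.
move=> H.
have : T_orbit (Phi N (rhat_r f)) (Phi N f).
  apply/H; exists 0, false, 1%g; by rewrite Tact_Phi0 ntrans0 rhat_nu1.
rewrite Hr => -[d [nu [E|E]]].
  have [_ Hg] := Phi_inj (nbhd_ntrans d sN) sN irr (esym E).
  by apply: Hn; right; exists nu.
have [HM _] := Phi_inj (nbhd_nrefl d sN) sN irr (esym E).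
apply: Hn; left; exists d => x; by rewrite -{1}HM /= mem_rev.
Qed.
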